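(* Let $p$ be a prime and $A_*$ a graded commutative $\mathbb F_p$-algebra. Then $[G_p(A_* ),G_p(A_* )]\subset G_p^{(0.5)}(A_* )$; $[G_p^{(0.5)}(A_* ),G_p^{(0.5)}(A_* )]\subset G_p^{(2)}(A_* )$; $[G_p^{(k)}(A_* ),G_p^{(k)}(A_* )]\subset G_p^{(k+2)}(A_* )$ for every positive integer $k$; $[G_p^{(k)}(A_* ),G_p(A_* )]\subset G_p^{(k+0.5)}(A_* )$ for every non-negative integer $k$; $[G_p^{(k+0.5)}(A_* ),G_p(A_* )]\subset G_p^{(k+1.5)}(A_* )$ for every non-negative integer $k$.
   Context: Graded commutative means $ab=(-1)^{\deg a\deg b}ba$. If $p=2$, $G_2(A_* )$ is the set of power series $\alpha(X)=\sum_{i\ge0}\alpha_iX^{2^i}\in A_*[[X]]$ ($X$ of degree $-1$) with $\alpha_i\in A_{2^i-1}$ and $\alpha_0=1$; in this case put $\epsilon=0$. If $p$ is odd, let $\epsilon$ have degree $-1$ with $\epsilon^2=0$, $X$ degree $-2$, and $G_p(A_* )$ is the set of $\alpha(X)=\sum_{i\ge0}\alpha_iX^{p^i}\in (A_*\otimes_{\mathbb F_p}\mathbb F_p[\epsilon]/(\epsilon^2))[[X]]$ with $\alpha_i$ homogeneous of degree $2(p^i-1)$ and $\alpha_0-1\in(\epsilon)$. The group law is $\alpha(X)\cdot\beta(X)=\beta(\alpha(X))$ (coefficient of $X^{p^i}$ equal to $\sum_{j=0}^i\alpha_{i-j}^{p^j}\beta_j$); the identity is $X$. For an integer $k\ge0$,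 $G_p^{(k)}(A_* )$ is the subgroup of elements of the form $X+\sum_{i\ge k+1}\alpha_iX^{p^i}$, and $G_p^{(k+0.5)}(A_* )$ the subgroup of elements of the form $X+\sum_{i\ge k+1}\alpha_iX^{p^i}$ with $\alpha_{k+1}\in(\epsilon)$. $[H,K]$ denotes the subgroup generated by commutators $h^{-1}k^{-1}hk$. *)

(* Defs.v *)
From HB Require Import structures.
From mathcomp Require Import all_boot all_order all_algebra.
Set Implicit Arguments. Unset Strict Implicit. Unset Printing Implicit Defensive.
Import Order.TTheory GRing.Theory Num.Theory.
Local Open Scope ring_scope.

Record graded_comm_Fp_alg (p : nat) (R : nzRingType) (A : int -> {pred R}) : Prop := {
  gc_char : p \in [pchar R];
  gc_zero : forall n, 0 \in A n;
  gc_sub : forall n x y, x \in A n -> y \in A n -> x - y \in A n;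
  gc_one : 1 \in A 0;
  gc_mul : forall m n x y, x \in A m -> y \in A n -> x * y \in A (m + n);
  gc_comm : forall m n x y, x \in A m -> y \in A n ->
              x * y = (-1) ^+ (absz (m * n)) * (y * x);
  gc_span : forall x : R, exists (s : seq int) (f : int -> R),
              [/\ uniq s, (forall n, f n \in A n) & x = \sum_(n <- s) f n];
  gc_indep : forall (s : seq int) (f : int -> R), uniq s ->
              (forall n, f n \in A n) -> \sum_(n <- s) f n = 0 ->
              forall n, n \in s -> f n = 0
}.

(* Elements of A_star (x) F_p[eps]/(eps^2): the pair (a, b) stands for a + b eps.
   All coefficients we use have even total degree, hence are central, so the
   ordinary (ungraded) product formula is the correct one. *)
Definition dmul (R : nzRingType) (x y : (R * R)%type) : (R * R)%type :=
  (x.1 * y.1, x.1 * y.2 + x.2 * y.1).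

Definition dexp (R : nzRingType) (x : (R * R)%type) (n : nat) : (R * R)%type :=
  iter n (dmul x) (1, 0).

(* A power series alpha(X) = sum_i alpha_i X^(p^i) is represented by its
   coefficient sequence i |-> alpha_i. *)
Definition pseries (R : nzRingType) := nat -> (R * R)%type.

Definition coef_ok (p : nat) (R : nzRingType) (A : int -> {pred R}) (i : nat)
  (x : (R * R)%type) : Prop :=
  if p == 2%N then x.1 \in A (Posz (2 ^ i).-1) /\ x.2 = 0
  else x.1 \in A (Posz (2 * (p ^ i).-1)) /\ x.2 \in A (Posz (2 * (p ^ i).-1).+1).

Definition inG (p : nat) (R : nzRingType) (A : int -> {pred R}) (a : pseries R) : Prop :=
  (a 0%N).1 = 1 /\ forall i, coef_ok p A i (a i).

(* group law: (a . b)_i = sum_{j=0}^i a_{i-j}^{p^j} b_j, i.e. b(a(X)) *)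
Definition gmul (p : nat) (R : nzRingType) (a b : pseries R) : pseries R :=
  fun i => (\sum_(j < i.+1) (dmul (dexp (a (i - j)%N) (p ^ j)) (b j)).1,
            \sum_(j < i.+1) (dmul (dexp (a (i - j)%N) (p ^ j)) (b j)).2).

Definition gone (R : nzRingType) : pseries R :=
  fun i => if i == 0%N then (1, 0) else (0, 0).

Definition is_ginv (p : nat) (R : nzRingType) (A : int -> {pred R}) (a b : pseries R) : Prop :=
  [/\ inG p A a, inG p A b, gmul p a b = gone R & gmul p b a = gone R].

Definition subgroupG (p : nat) (R : nzRingType) (A : int -> {pred R})
  (S : pseries R -> Prop) : Prop :=
  [/\ forall a, S a -> inG p A a,
      S (gone R),
      forall a b, S a -> S b -> S (gmul p a b)
    & forall a b, S a -> is_ginv p A a b -> S b].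

Definition gen_subgroup (p : nat) (R : nzRingType) (A : int -> {pred R})
  (X : pseries R -> Prop) (a : pseries R) : Prop :=
  forall S, subgroupG p A S -> (forall x, X x -> S x) -> S a.

Definition commutators (p : nat) (R : nzRingType) (A : int -> {pred R})
  (H K : pseries R -> Prop) (c : pseries R) : Prop :=
  exists h k hi ki, [/\ H h, K k, is_ginv p A h hi, is_ginv p A k ki &
    c = gmul p (gmul p (gmul p hi ki) h) k].

Definition commG (p : nat) (R : nzRingType) (A : int -> {pred R})
  (H K : pseries R -> Prop) : pseries R -> Prop :=
  gen_subgroup p A (commutators p A H K).

Definition Gk (p : nat) (R : nzRingType) (A : int -> {pred R}) (k : nat)
  (a : pseries R) : Prop :=
  [/\ inG p A a, a 0%N = (1, 0) & forall i, (1 <= i <= k)%N -> a i = (0, 0)].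

Definition Gkh (p : nat) (R : nzRingType) (A : int -> {pred R}) (k : nat)
  (a : pseries R) : Prop :=
  Gk p A k a /\ (a k.+1).1 = 0.

Definition subsetP_ (T : Type) (X Y : T -> Prop) : Prop := forall x, X x -> Y x.

(* Main.v *)
Require Import Defs.
From HB Require Import structures.
From mathcomp Require Import all_boot all_order all_algebra.
From mathcomp Require Import zify ring.
Set Implicit Arguments. Unset Strict Implicit. Unset Printing Implicit Defensive.
Import GRing.Theory.
Local Open Scope ring_scope.

Section Basic.
Variable R : nzRingType.
Implicit Types x y : (R * R)%type.

Lemma pairD x y : x + y = (x.1 + y.1, x.2 + y.2).
Proof. by []. Qed.
Lemma pair0D x : (0,0) + x = x.
Proof. by case: x => a b; rewrite pairD /= !add0r. Qed.
Lemma pairD0 x : x + (0,0) = x.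
Proof. by case: x => a b; rewrite pairD /= !addr0. Qed.

Lemma dmul1l x : dmul (1,0) x = x.
Proof. by case: x => a b; rewrite /dmul /= !mul1r mul0r addr0. Qed.
Lemma dmul1r x : dmul x (1,0) = x.
Proof. by case: x => a b; rewrite /dmul /= !mulr1 mulr0 add0r. Qed.
Lemma dmul0l x : dmul (0,0) x = (0,0).
Proof. by rewrite /dmul /= !mul0r addr0. Qed.
Lemma dmul0r x : dmul x (0,0) = (0,0).
Proof. by rewrite /dmul /= !mulr0 addr0. Qed.
Lemma dmulDl x y z : dmul (x + y) z = dmul x z + dmul y z.
Proof. by rewrite /dmul !pairD /= !mulrDl addrACA. Qed.
Lemma dexp1 x : dexp x 1 = x.
Proof. exact: dmul1r. Qed.
Lemma dexpS x n : dexp x n.+1 = dmul x (dexp x n).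
Proof. by rewrite /dexp iterS. Qed.
Lemma dexp_one n : dexp ((1,0) : R * R) n = (1,0).
Proof. by elim: n => // n IH; rewrite dexpS IH dmul1l. Qed.
Lemma dexp0 n : (0 < n)%N -> dexp ((0,0) : R*R) n = (0,0).
Proof. by case: n => // n _; rewrite dexpS dmul0l. Qed.
Lemma dexp_fst x n : (dexp x n).1 = x.1 ^+ n.
Proof. elim: n => [|n IH]; first by rewrite expr0. by rewrite dexpS /dmul /= IH exprS. Qed.
Lemma dexp_snd0 x n : x.2 = 0 -> (dexp x n).2 = 0.
Proof. by move=> h; elim: n => [|n IH] //; rewrite dexpS /dmul /= IH h mulr0 mul0r addr0. Qed.
Lemma dexp_unit z n : dexp ((1,z) : R*R) n = (1, z *+ n).
Proof.
elim: n => [|n IH]; first by rewrite mulr0n.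
rewrite dexpS IH /dmul /= !mul1r mulr1 mulrS; congr (_,_); exact: addrC.
Qed.
Lemma dexp_eps (y : R) n : dexp ((0,y) : R*R) n.+2 = (0,0).
Proof.
elim: n => [|n IH]; last by rewrite dexpS IH dmul0r.
by rewrite !dexpS /dexp /= /dmul /= !(mul0r, mulr0, mulr1, addr0, add0r).
Qed.

Lemma sum_ends (V : zmodType) (F : nat -> V) i : (0 < i)%N ->
  (forall j, (0 < j < i)%N -> F j = 0) -> \sum_(j < i.+1) F j = F 0%N + F i.
Proof.
case: i => // n _ H.
rewrite big_ord_recl big_ord_recr /= /bump /= big1 ?add0r // => j _.
apply: H; rewrite add1n /=; exact: ltn_ord.
Qed.

Variable p : nat.
Hypothesis p_gt0 : (0 < p)%N.

Lemma gmul0 (a b : pseries R) : gmul p a b 0 = dmul (a 0%N) (b 0%N).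
Proof.
rewrite /gmul !big_ord1; change (nat_of_ord (@ord0 0)) with 0%N.
rewrite subnn expn0 dexp1. by case: (dmul _ _).
Qed.

Lemma gmul_ends (a b : pseries R) i : (0 < i)%N ->
  (forall j, (0 < j < i)%N -> dmul (dexp (a (i - j)%N) (p ^ j)) (b j) = (0,0)) ->
  gmul p a b i = dmul (a i) (b 0%N) + dmul (dexp (a 0%N) (p ^ i)) (b i).
Proof.
move=> i0 H; rewrite /gmul.
rewrite (@sum_ends _ (fun j => (dmul (dexp (a (i - j)%N) (p ^ j)) (b j)).1) i i0); last by move=> j /H ->.
rewrite (@sum_ends _ (fun j => (dmul (dexp (a (i - j)%N) (p ^ j)) (b j)).2) i i0); last by move=> j /H ->.
by rewrite subn0 subnn expn0 dexp1.
Qed.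

Lemma gmul_cong (a a' b b' : pseries R) i :
  (forall j, (j <= i)%N -> a j = a' j) -> (forall j, (j <= i)%N -> b j = b' j) ->
  gmul p a b i = gmul p a' b' i.
Proof.
move=> Ha Hb; rewrite /gmul; congr (_,_); apply: eq_bigr => j _;
  have hj := ltn_ord j; rewrite ltnS in hj; by rewrite Ha ?leq_subr // Hb.
Qed.

Lemma gmul_last (a a' b : pseries R) i :
  (forall j, (j < i)%N -> a j = a' j) ->
  gmul p a b i + dmul (a' i) (b 0%N) = gmul p a' b i + dmul (a i) (b 0%N).
Proof.
move=> Ha; rewrite /gmul !big_ord_recl; change (nat_of_ord (@ord0 i)) with 0%N.
rewrite subn0 expn0 !dexp1.
have E : forall j : 'I_i, a (i - lift ord0 j)%N = a' (i - lift ord0 j)%N.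
  move=> j; apply: Ha. rewrite lift0. have := ltn_ord j. lia.
rewrite !pairD /=; congr (_,_); under eq_bigr => j _ do rewrite E;
  by rewrite addrAC [RHS]addrAC; congr (_+_); exact: addrC.
Qed.

End Basic.

Section Filt.
Variable R : nzRingType.
Variable p : nat.
Hypothesis p_gt0 : (0 < p)%N.
Hypothesis pchar0 : (p%:R : R) = 0.

Section H.
Variables (h : pseries R) (m : nat).
Hypothesis h0 : h 0%N = (1,0).
Hypothesis hz : forall j, (0 < j <= m)%N -> h j = (0,0).

Lemma FL1l u i : (i <= m)%N -> gmul p h u i = u i.
Proof.
case: i => [_|i im]; first by rewrite gmul0 h0 dmul1l.
rewrite gmul_ends //.
  by rewrite hz // dmul0l h0 dexp_one dmul1l pair0D.
move=> j /andP [j0 ji]; rewrite (hz (j := (i.+1 - j)%N)); last by lia.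
by rewrite dexp0 ?dmul0l // expn_gt0 p_gt0.
Qed.

Lemma FL1r u i : (i <= m)%N -> gmul p u h i = u i.
Proof.
case: i => [_|i im]; first by rewrite gmul0 h0 dmul1r.
rewrite gmul_ends //.
  by rewrite (hz (j := i.+1)) // dmul0r h0 dmul1r pairD0.
move=> j /andP [j0 ji]; rewrite (hz (j := j)); last by lia.
by rewrite dmul0r.
Qed.

Lemma FL2l u : gmul p h u m.+1 = dmul (h m.+1) (u 0%N) + u m.+1.
Proof.
rewrite gmul_ends //.
  by rewrite h0 dexp_one dmul1l.
move=> j /andP [j0 ji]; rewrite (hz (j := (m.+1 - j)%N)); last by lia.
by rewrite dexp0 ?dmul0l // expn_gt0 p_gt0.
Qed.

Lemma FL2r u : gmul p u h m.+1 = u m.+1 + dmul (dexp (u 0%N) (p ^ m.+1)) (h m.+1).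
Proof.
rewrite gmul_ends //.
  by rewrite h0 dmul1r.
move=> j /andP [j0 ji]; rewrite (hz (j := j)); last by lia.
by rewrite dmul0r.
Qed.
End H.

Lemma dexp_p_unit (x : (R * R)%type) n : x.1 = 1 -> dexp x (p ^ n.+1) = (1,0).
Proof.
case: x => a z /= ->; rewrite dexp_unit -mulr_natr natrX pchar0 exprS mul0r mulr0.
by [].
Qed.

Lemma inv_sum m (h hi : pseries R) :
  h 0%N = (1,0) -> (forall j, (0 < j <= m)%N -> h j = (0,0)) ->
  hi 0%N = (1,0) -> (forall i, gmul p h hi i = gone R i) ->
  h m.+1 + hi m.+1 = 0.
Proof.
move=> h0 hz hi0 hh; have := hh m.+1.
by rewrite (FL2l h0 hz) hi0 dmul1r.
Qed.

Lemma commK m (h hi k ki : pseries R) :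
  h 0%N = (1,0) -> (forall j, (0 < j <= m)%N -> h j = (0,0)) ->
  hi 0%N = (1,0) -> (forall j, (0 < j <= m)%N -> hi j = (0,0)) ->
  (forall i, gmul p ki k i = gone R i) ->
  (ki 0%N).1 = 1 ->
  (forall i, (i <= m)%N -> gmul p (gmul p (gmul p hi ki) h) k i = gone R i) /\
  gmul p (gmul p (gmul p hi ki) h) k m.+1
    = dmul (dmul (hi m.+1) (ki 0%N) + h m.+1) (k 0%N).
Proof.
move=> h0 hz hi0 hiz kk ki0.
set u := gmul p hi ki. set v := gmul p u h.
have Hu : forall j, (j <= m)%N -> u j = ki j by move=> j jm; rewrite /u (FL1l hi0 hiz).
have Hv : forall j, (j <= m)%N -> v j = ki j by move=> j jm; rewrite /v (FL1r h0 hz) // Hu.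
split.
  move=> i im; rewrite -kk; apply: gmul_cong => // j ji; apply: Hv; exact: leq_trans ji im.
have E : gmul p v k m.+1 + dmul (ki m.+1) (k 0%N) = gmul p ki k m.+1 + dmul (v m.+1) (k 0%N).
  by apply: (gmul_last p_gt0) => j jm; apply: Hv.
rewrite kk in E; change (gone R m.+1) with ((0,0) : (R * R)%type) in E.
have Ev : v m.+1 = u m.+1 + h m.+1.
  by rewrite /v (FL2r h0 hz) (Hu 0%N) // dexp_p_unit // dmul1l.
have Eu : u m.+1 = dmul (hi m.+1) (ki 0%N) + ki m.+1 by rewrite /u (FL2l hi0 hiz).
rewrite Ev Eu !dmulDl pair0D in E.
apply: (addIr (dmul (ki m.+1) (k 0%N))); rewrite E dmulDl.
by rewrite addrAC.
Qed.
End Filt.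

Definition rho (R : nzRingType) (a : pseries R) : pseries R := fun i => ((a i).1, 0).

Section Rho.
Variable R : nzRingType.
Variable p : nat.

Lemma gmul_rho_fst (a b : pseries R) i : (gmul p a b i).1 = (gmul p (rho a) (rho b) i).1.
Proof. rewrite /gmul /=; apply: eq_bigr => j _; by rewrite /dmul /= !dexp_fst. Qed.

Lemma gmul_rho_snd (a b : pseries R) i : (gmul p (rho a) (rho b) i).2 = 0.
Proof.
rewrite /gmul /=; apply: big1 => j _.
by rewrite /dmul /= dexp_snd0 // mulr0 mul0r addr0.
Qed.

Lemma rho_gmul (a b : pseries R) i : rho (gmul p a b) i = gmul p (rho a) (rho b) i.
Proof. by rewrite /rho gmul_rho_fst [RHS]surjective_pairing gmul_rho_snd. Qed.

Lemma rho_inv (a b : pseries R) : (forall i, gmul p a b i = gone R i) ->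
  forall i, gmul p (rho a) (rho b) i = gone R i.
Proof. by move=> H i; rewrite -rho_gmul /rho H /gone; case: i. Qed.
End Rho.

Section Grade.
Variables (R : nzRingType) (p : nat) (A : int -> {pred R}).
Hypothesis gA : graded_comm_Fp_alg p A.

Lemma A0 n : 0 \in A n.
Proof. exact: gc_zero gA n. Qed.
Lemma AD n x y : x \in A n -> y \in A n -> x + y \in A n.
Proof.
move=> hx hy; have -> : x + y = x - (0 - y) by rewrite sub0r opprK.
exact: (gc_sub gA hx (gc_sub gA (A0 n) hy)).
Qed.
Lemma AM m n k x y : x \in A m -> y \in A n -> m + n = k -> x * y \in A k.
Proof. by move=> hx hy <-; exact: gc_mul gA _ _ _ _ hx hy. Qed.
Lemma Aeq m n x : x \in A m -> m = n -> x \in A n.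
Proof. by move=> h <-. Qed.
Lemma Asum n k (F : 'I_k -> R) : (forall j, F j \in A n) -> \sum_(j < k) F j \in A n.
Proof.
move=> H; apply: (big_ind (fun x => x \in A n)); [exact: A0 | exact: AD | by move=> j _].
Qed.

Lemma dexp_hom (x : (R * R)%type) d n : x.1 \in A d -> x.2 \in A (d + 1) ->
  (dexp x n).1 \in A (d * n%:Z) /\ (dexp x n).2 \in A (d * n%:Z + 1).
Proof.
move=> h1 h2; elim: n => [|n [IH1 IH2]].
  rewrite /dexp /=; split.
    by apply: (Aeq (gc_one gA)); ring.
  by apply: (Aeq (A0 _)).
rewrite dexpS /dmul /=; split.
  by apply: (AM h1 IH1); rewrite intS; ring.
apply: AD.
  by apply: (AM h1 IH2); rewrite intS; ring.
by apply: (AM h2 IH1); rewrite intS; ring.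
Qed.

Definition D (i : nat) : int := Posz ((if p == 2%N then 1 else 2) * (p ^ i).-1)%N.

Lemma D_add i j : (j <= i)%N -> (0 < p)%N -> D (i - j) * (p ^ j)%N%:Z + D j = D i.
Proof.
move=> ji p0; rewrite /D -PoszM -PoszD; congr Posz.
have E : (p ^ i = p ^ (i - j) * p ^ j)%N by rewrite -expnD subnK.
rewrite E.
have x0 : (0 < p ^ (i - j))%N by rewrite expn_gt0 p0.
have y0 : (0 < p ^ j)%N by rewrite expn_gt0 p0.
move: x0 y0; move: (p ^ (i - j))%N (p ^ j)%N => x y x0 y0.
case: (p == 2%N); nia.
Qed.

Lemma coef_hom i (x : (R * R)%type) : coef_ok p A i x -> x.1 \in A (D i) /\ x.2 \in A (D i + 1).
Proof.
rewrite /coef_ok /D; case: (p =P 2%N) => [-> | _] [h1 h2].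
  split; first by rewrite mul1n. by rewrite h2; exact: A0.
split => //; apply: (Aeq h2); lia.
Qed.

Lemma coef_mk i (x : (R * R)%type) : x.1 \in A (D i) -> x.2 \in A (D i + 1) ->
  (p = 2%N -> x.2 = 0) -> coef_ok p A i x.
Proof.
rewrite /coef_ok /D; case: (p =P 2%N) => [p2 | _] h1 h2 h3.
  by split; [rewrite p2 mul1n in h1 | exact: h3].
split => //; apply: (Aeq h2); lia.
Qed.

Lemma inG_mul (a b : pseries R) : (0 < p)%N -> inG p A a -> inG p A b -> inG p A (gmul p a b).
Proof.
move=> p0 [a0 ha] [b0 hb]; split.
  by rewrite gmul0 /dmul /= a0 b0 mulr1.
move=> i; apply: coef_mk.
- rewrite /gmul /=; apply: Asum => j.
  have ji : (j <= i)%N by have := ltn_ord j; rewrite ltnS.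
  have [ha1 ha2] := coef_hom (ha (i - j)%N). have [hb1 hb2] := coef_hom (hb j).
  have [e1 e2] := dexp_hom (p ^ j) ha1 ha2.
  rewrite /dmul /=; apply: (AM e1 hb1); exact: D_add.
- rewrite /gmul /=; apply: Asum => j.
  have ji : (j <= i)%N by have := ltn_ord j; rewrite ltnS.
  have [ha1 ha2] := coef_hom (ha (i - j)%N). have [hb1 hb2] := coef_hom (hb j).
  have [e1 e2] := dexp_hom (p ^ j) ha1 ha2.
  rewrite /dmul /=; apply: AD.
    by apply: (AM e1 hb2); rewrite addrA D_add.
  by apply: (AM e2 hb1); rewrite addrAC D_add.
- move=> p2; rewrite /gmul /=; apply: big1 => j _.
  have := hb j; rewrite /coef_ok p2 eqxx => -[_ b2].
  have := ha (i - j)%N; rewrite /coef_ok p2 eqxx => -[_ a2].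
  by rewrite /dmul /= b2 dexp_snd0 // mulr0 mul0r addr0.
Qed.

Lemma gone_inG : inG p A (gone R).
Proof.
split => // -[|i]; apply: coef_mk => //=.
- by apply: (Aeq (gc_one gA)); rewrite /D expn0 /= muln0.
- exact: A0.
- exact: A0.
- exact: A0.
Qed.

End Grade.

Section Groups.
Variables (R : nzRingType) (p : nat) (A : int -> {pred R}).
Hypothesis gA : graded_comm_Fp_alg p A.
Hypothesis p_gt0 : (0 < p)%N.

Lemma Gk_mul k (a b : pseries R) : Gk p A k a -> Gk p A k b -> Gk p A k (gmul p a b).
Proof.
move=> [ia a0 az] [ib b0 bz]; split.
- exact: inG_mul.
- by rewrite (FL1l p_gt0 a0 az).
- by move=> i ik; rewrite (FL1l p_gt0 a0 az) ?bz //; case/andP: ik.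
Qed.

Lemma Gk_inv k (a b : pseries R) : Gk p A k a -> is_ginv p A a b -> Gk p A k b.
Proof.
move=> [ia a0 az] [_ ib ab _]; split => //.
- by rewrite -(FL1l p_gt0 a0 az) // ab.
- by move=> i /andP [i0 ik]; rewrite -(FL1l p_gt0 a0 az) // ab /gone; case: i i0 {ik}.
Qed.

Lemma Gk_one k : Gk p A k (gone R).
Proof. by split; [exact: gone_inG | by [] | move=> [|i]]. Qed.

Lemma Gkh_mul k (a b : pseries R) : Gkh p A k a -> Gkh p A k b -> Gkh p A k (gmul p a b).
Proof.
move=> [Ga a1] [Gb b1]; split; first exact: Gk_mul.
case: Ga => _ a0 az; rewrite (FL2l p_gt0 a0 az) pairD /= /dmul /= a1 b1.
by rewrite mul0r addr0.
Qed.

Lemma Gkh_inv k (a b : pseries R) : Gkh p A k a -> is_ginv p A a b -> Gkh p A k b.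
Proof.
move=> [Ga a1] Hi; split; first exact: (Gk_inv Ga).
have [_ b0 _] := Gk_inv Ga Hi.
case: Hi => _ _ ab _; case: Ga => _ a0 az.
have := congr1 (fun f => (f k.+1).1) ab; rewrite (FL2l p_gt0 a0 az) pairD /= /dmul /= a1.
by rewrite mul0r add0r.
Qed.

Lemma Gkh_one k : Gkh p A k (gone R).
Proof. by split; [exact: Gk_one | by []]. Qed.

Lemma sub_Gk k : subgroupG p A (Gk p A k).
Proof.
split.
- by move=> a [].
- exact: Gk_one.
- exact: Gk_mul.
- exact: Gk_inv.
Qed.

Lemma sub_Gkh k : subgroupG p A (Gkh p A k).
Proof.
split.
- by move=> a [[]].
- exact: Gkh_one.
- exact: Gkh_mul.
- exact: Gkh_inv.
Qed.

Lemma comm_in (S : pseries R -> Prop) :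
  (forall a b, S a -> S b -> S (gmul p a b)) ->
  (forall a b, S a -> is_ginv p A a b -> S b) ->
  forall c, commutators p A S S c -> S c.
Proof.
move=> Sm Si c [h [k [hi [ki [Sh Sk Hhi Hki ->]]]]].
exact: (Sm _ _ (Sm _ _ (Sm _ _ (Si _ _ Sh Hhi) (Si _ _ Sk Hki)) Sh) Sk).
Qed.

Lemma comm_add (S : pseries R -> Prop) (f : pseries R -> R) :
  (forall a b, S a -> S b -> S (gmul p a b)) ->
  (forall a b, S a -> is_ginv p A a b -> S b) ->
  (forall a b, S a -> S b -> f (gmul p a b) = f a + f b) ->
  f (gone R) = 0 ->
  forall c, commutators p A S S c -> f c = 0.
Proof.
move=> Sm Si fa f1 c [h [k [hi [ki [Sh Sk Hhi Hki ->]]]]].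
have Shi := Si _ _ Sh Hhi. have Ski := Si _ _ Sk Hki.
have [_ _ hhi _] := Hhi. have [_ _ kki _] := Hki.
have S1 := Sm _ _ Shi Ski. have S2 := Sm _ _ S1 Sh.
rewrite (fa _ _ S2 Sk) (fa _ _ S1 Sh) (fa _ _ Shi Ski).
have e1 : f h + f hi = 0 by rewrite -fa // hhi.
have e2 : f k + f ki = 0 by rewrite -fa // kki.
rewrite -addrA addrACA (addrC (f hi)) (addrC (f ki)) e1 e2 addr0.
by [].
Qed.

Lemma Gk_add k (a b : pseries R) i : (0 < k)%N -> Gk p A k a -> Gk p A k b ->
  (0 < i <= k.+2)%N -> gmul p a b i = a i + b i.
Proof.
move=> k0 [_ a0 az] [_ b0 bz] /andP [i0 ik].
rewrite gmul_ends //; last first.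
  move=> j /andP [j0 ji]; case: (leqP j k) => jk.
    by rewrite bz ?j0 // dmul0r.
  by rewrite az ?dexp0 ?dmul0l // ?expn_gt0 ?p_gt0 //; lia.
by rewrite b0 dmul1r a0 dexp_one dmul1l.
Qed.

Lemma Gkh0_add (a b : pseries R) i : (1 < p)%N -> Gkh p A 0 a -> Gkh p A 0 b ->
  (0 < i <= 2)%N -> gmul p a b i = a i + b i.
Proof.
move=> p1 [[_ a0 az] a1] [[_ b0 bz] b1] /andP [i0 ik].
rewrite gmul_ends //; last first.
  move=> j /andP [j0 ji].
  have -> : j = 1%N by lia.
  have -> : (i - 1 = 1)%N by lia.
  rewrite [a 1%N]surjective_pairing a1 expn1.
  have -> : p = (p - 2).+2 by lia.
  by rewrite dexp_eps dmul0l.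
by rewrite b0 dmul1r a0 dexp_one dmul1l.
Qed.

End Groups.

Lemma aux0 (R : nzRingType) (a b c d : (R * R)%type) : a.1 = 0 -> b.1 = 0 -> c.1 = 1 ->
  b + a = 0 -> dmul (dmul a c + b) d = (0,0).
Proof.
case: a b c d => [a1 a2] [b1 b2] [c1 c2] [d1 d2] /= -> -> -> /(congr1 snd) /= e.
by rewrite /dmul pairD /= !mul0r mulr1 !add0r (addrC a2) e !mul0r addr0.
Qed.

Lemma aux1 (R : nzRingType) (a b c d : (R * R)%type) : c.1 = 1 -> d.1 = 1 ->
  b + a = 0 -> (dmul (dmul a c + b) d).1 = 0.
Proof.
case: a b c d => [a1 a2] [b1 b2] [c1 c2] [d1 d2] /= -> -> /(congr1 fst) /= e.
by rewrite /dmul /= !mulr1 addrC e.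
Qed.

Lemma gone_pos (R : nzRingType) i : (0 < i)%N -> gone R i = (0,0).
Proof. by case: i. Qed.

Theorem proposition3p2 (p : nat) (R : nzRingType) (A : int -> {pred R}) :
  prime p -> graded_comm_Fp_alg p A ->
  [/\ subsetP_ (commG p A (inG p A) (inG p A)) (Gkh p A 0),
      subsetP_ (commG p A (Gkh p A 0) (Gkh p A 0)) (Gk p A 2),
      (forall k, (0 < k)%N -> subsetP_ (commG p A (Gk p A k) (Gk p A k)) (Gk p A k.+2)),
      (forall k, subsetP_ (commG p A (Gk p A k) (inG p A)) (Gkh p A k))
    & (forall k, subsetP_ (commG p A (Gkh p A k) (inG p A)) (Gkh p A k.+1))].
Proof.
move=> pr gA.
have p0 : (0 < p)%N := prime_gt0 pr.
have p1 : (1 < p)%N := prime_gt1 pr.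
have pc : (p%:R : R) = 0 := pcharf0 (gc_char gA).
have inGm : forall a b, inG p A a -> inG p A b -> inG p A (gmul p a b).
  move=> a b ha hb; exact (inG_mul gA p0 ha hb).
have inGi : forall a b, inG p A a -> is_ginv p A a b -> inG p A b by move=> a b _ [].
split.
- move=> c Hc; apply: Hc; first exact: sub_Gkh gA p0 0.
  move=> x Hx.
  have ix := comm_in inGm inGi Hx.
  have f0 : (x 0%N).2 = 0.
    apply: (comm_add inGm inGi (f := fun a => (a 0%N).2) _ _ Hx) => //.
    move=> a b [a0 _] [b0 _]; rewrite gmul0 /dmul /= a0 b0 mul1r mulr1.
    exact: addrC.
  have f1 : (x 1%N).1 = 0.
    apply: (comm_add inGm inGi (f := fun a => (a 1%N).1) _ _ Hx) => //.
    move=> a b [a0 _] [b0 _]; rewrite gmul_ends //; last by move=> j /andP [j0 j1]; exfalso; lia.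
    by rewrite pairD /dmul /= dexp_fst a0 b0 expr1n mulr1 mul1r.
  split => //; split => //; last by move=> i /andP [i0 i1]; exfalso; lia.
  by case: ix => x01 _; rewrite [x 0%N]surjective_pairing f0 x01.
- move=> c Hc; apply: Hc; first exact: sub_Gk gA p0 2.
  move=> x Hx.
  have Sm := @Gkh_mul R p A gA p0 0. have Si := @Gkh_inv R p A p0 0.
  have [[ix x0 _] _] := comm_in Sm Si Hx.
  split => // i /andP [i0 i2].
  have gi := gone_pos R i0.
  have addi : forall a b, Gkh p A 0 a -> Gkh p A 0 b -> gmul p a b i = a i + b i.
    by move=> a b ha hb; apply: (Gkh0_add p0 p1 ha hb); rewrite i0 i2.
  have e1 : (x i).1 = 0.
    apply: (comm_add Sm Si (f := fun a => (a i).1) _ _ Hx); last by rewrite gi.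
    by move=> a b ha hb; rewrite addi.
  have e2 : (x i).2 = 0.
    apply: (comm_add Sm Si (f := fun a => (a i).2) _ _ Hx); last by rewrite gi.
    by move=> a b ha hb; rewrite addi.
  by rewrite [x i]surjective_pairing e1 e2.
- move=> k k0 c Hc; apply: Hc; first exact: sub_Gk gA p0 k.+2.
  move=> x Hx.
  have Sm := @Gk_mul R p A gA p0 k. have Si := @Gk_inv R p A p0 k.
  have [ix x0 _] := comm_in Sm Si Hx.
  split => // i /andP [i0 i2].
  have gi := gone_pos R i0.
  have addi : forall a b, Gk p A k a -> Gk p A k b -> gmul p a b i = a i + b i.
    by move=> a b ha hb; apply: (Gk_add p0 k0 ha hb); rewrite i0 i2.
  have e1 : (x i).1 = 0.
    apply: (comm_add Sm Si (f := fun a => (a i).1) _ _ Hx); last by rewrite gi.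
    by move=> a b ha hb; rewrite addi.
  have e2 : (x i).2 = 0.
    apply: (comm_add Sm Si (f := fun a => (a i).2) _ _ Hx); last by rewrite gi.
    by move=> a b ha hb; rewrite addi.
  by rewrite [x i]surjective_pairing e1 e2.
- move=> k c Hc; apply: Hc; first exact: sub_Gkh gA p0 k.
  move=> x [h [k' [hi [ki [Hh Hk Hhi Hki ->]]]]].
  have Hhi' := Gk_inv p0 Hh Hhi.
  case: (Hh) => ih h0 hz. case: (Hhi') => ihi hi0 hiz.
  case: (Hki) => ik iki _ kik. case: (Hhi) => _ _ hhi _.
  have [ki0 _] := iki. have [k'0 _] := ik.
  have [C1 C2] := commK p0 pc h0 hz hi0 hiz (fun i => congr1 (fun f => f i) kik) ki0.
  have hs := inv_sum p0 h0 hz hi0 (fun i => congr1 (fun f => f i) hhi).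
  have ix := inGm _ _ (inGm _ _ (inGm _ _ ihi iki) ih) ik.
  split; first split => //.
  + by rewrite C1.
  + by move=> i /andP [i0 ik']; rewrite C1 // gone_pos.
  + by rewrite C2; apply: aux1.
- move=> k c Hc; apply: Hc; first exact: sub_Gkh gA p0 k.+1.
  move=> x [h [k' [hi [ki [Hh Hk Hhi Hki ->]]]]].
  have Hhi' := Gkh_inv p0 Hh Hhi.
  case: (Hh) => [[ih h0 hz] h1]. case: (Hhi') => [[ihi hi0 hiz] hi1].
  case: (Hki) => ik iki _ kik. case: (Hhi) => _ _ hhi _.
  have [ki0 _] := iki. have [k'0 _] := ik.
  have [C1 C2] := commK p0 pc h0 hz hi0 hiz (fun i => congr1 (fun f => f i) kik) ki0.
  have hs := inv_sum p0 h0 hz hi0 (fun i => congr1 (fun f => f i) hhi).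
  have ix := inGm _ _ (inGm _ _ (inGm _ _ ihi iki) ih) ik.
  split; first split => //.
  + by rewrite C1.
  + move=> i /andP [i0 ik'].
    have [ik2|->] : (i <= k)%N \/ i = k.+1 by lia.
      by rewrite C1 // gone_pos.
    by rewrite C2; apply: aux0.
  + have rh0 : rho h 0%N = (1,0) by rewrite /rho h0.
    have rhi0 : rho hi 0%N = (1,0) by rewrite /rho hi0.
    have rhz : forall j, (0 < j <= k.+1)%N -> rho h j = (0,0).
      move=> j /andP [j0 jk]; rewrite /rho.
      have [jk2|->] : (j <= k)%N \/ j = k.+1 by lia.
        by rewrite hz ?j0.
      by rewrite h1.
    have rhiz : forall j, (0 < j <= k.+1)%N -> rho hi j = (0,0).
      move=> j /andP [j0 jk]; rewrite /rho.
      have [jk2|->] : (j <= k)%N \/ j = k.+1 by lia.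
        by rewrite hiz ?j0.
      by rewrite hi1.
    have [_ C2'] := commK p0 pc rh0 rhz rhi0 rhiz
       (rho_inv (fun i => congr1 (fun f => f i) kik)) ki0.
    have hs' := inv_sum p0 rh0 rhz rhi0 (rho_inv (fun i => congr1 (fun f => f i) hhi)).
    have R1 : (gmul p (gmul p (gmul p hi ki) h) k' k.+2).1
        = (gmul p (gmul p (gmul p (rho hi) (rho ki)) (rho h)) (rho k') k.+2).1.
      rewrite gmul_rho_fst; apply: (congr1 fst); apply: gmul_cong => // j _.
      rewrite rho_gmul; apply: gmul_cong => // l _; exact: rho_gmul.
    by rewrite R1 C2'; apply: aux1.
Qed.
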